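(* Let $p$ be a prime and $k,\ell,m$ integers with $k>0$ and $\ell,m\ge0$; put $q=p^k$, $Q=p^{\ell}$, $R=p^m$, and \[ f_5(X)=X^{qQ+q}-X^{qQ+1}-X^{Q+q}+X^{Q+1}+X^{q^2R}+X^{qR}+X^{R}. \] Then $f_5(X)$ permutes $\mathbb{F}_{q^3}$ if and only if $\gcd(q-1,Q+1)=1$, or equivalently, if and only if $p=2$ and $\operatorname{ord}_2(k)\le\operatorname{ord}_2(\ell)$.
   Context: A polynomial permutes $\mathbb{F}_{q^3}$ if the induced map $\mathbb{F}_{q^3}\to\mathbb{F}_{q^3}$ is a bijection. For a nonzero integer $N$, $\operatorname{ord}_2(N)$ is the largest integer $s\ge0$ with $2^s\mid N$, and $\operatorname{ord}_2(0)=\infty$. *)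

(* Defs.v *)
From HB Require Import structures.
From mathcomp Require Import all_boot all_order all_algebra all_field.
Set Implicit Arguments. Unset Strict Implicit. Unset Printing Implicit Defensive.
Import GRing.Theory.
Local Open Scope ring_scope.

Definition permutes (F : finFieldType) (P : {poly F}) : Prop :=
  bijective (fun x : F => P.[x]).

Definition f5 (F : finFieldType) (q Q R : nat) : {poly F} :=
  'X^(q * Q + q) - 'X^(q * Q + 1) - 'X^(Q + q) + 'X^(Q + 1)
  + 'X^(q ^ 2 * R) + 'X^(q * R) + 'X^R.

(* 2-adic valuation, with ord_2(0) = infinity (encoded as None). *)
Definition ord2 (n : nat) : option nat :=
  if n == 0%N then None else Some (logn 2 n).

Definition ole (a b : option nat) : bool :=
  match a, b with
  | _, None => true
  | None, Some _ => false
  | Some x, Some y => (x <= y)%N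
  end.

(* Main.v *)
Require Import Defs.
From HB Require Import structures.
From mathcomp Require Import all_boot all_order all_algebra all_field.
From mathcomp Require Import zify ring cyclic.
Set Implicit Arguments. Unset Strict Implicit. Unset Printing Implicit Defensive.

(* Proof outline:
   - number theory on gcd(2^a-1, 2^b+1) (part 2 of the statement);
   - if gcd > 1, an explicit collision f(c*x0) = f(x0) with c^(q-1) = c^(Q+1) = 1;
   - if gcd = 1 then p = 2 and f(x) = (x^q-x)^(Q+1) + Tr(x)^R; injectivity reduces to
     a statement about roots of X^(q+1) = X + 1, proved in an algebraic closure
     containing a primitive cube root of unity. *)

Definition S2 d n := 2 ^ n = 1 %[mod d].

Lemma S2_mul d n m : S2 d n -> S2 d (n * m).
Proof. by rewrite /S2 expnM => H; rewrite -modnXm H modnXm exp1n. Qed.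

Lemma S2_gcd d m n : S2 d m -> S2 d n -> S2 d (gcdn m n).
Proof.
case: (posnP m) => [->|m0]; first by rewrite gcd0n.
move=> Hm Hn; have [a _ Ha] := Bezoutl n m0.
have E : gcdn m n + a * n = (gcdn m n + a * n) %/ m * m by rewrite divnK.
have H1 : 2 ^ (gcdn m n + a * n) = 1 %[mod d].
  by rewrite E mulnC; apply: S2_mul.
have H2 : 2 ^ (gcdn m n + a * n) = 2 ^ gcdn m n %[mod d].
  have Han : 2 ^ (a * n) = 1 %[mod d] by rewrite mulnC; apply: S2_mul.
  by rewrite expnD -modnMmr Han modnMmr muln1.
rewrite /S2 -H1 H2 //.
Qed.

Lemma S2_dvd d n : (S2 d n) <-> (d %| 2 ^ n - 1).
Proof. by rewrite /S2 -eqn_mod_dvd ?expn_gt0 //; split => /eqP. Qed.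

Lemma dvd_sub2 d n : d %| 2 ^ n - 1 -> d %| 2 ^ n + 1 -> d %| 2.
Proof.
move=> H1 H2; have -> : 2 = (2 ^ n + 1) - (2 ^ n - 1).
  have := expn_gt0 2 n; lia.
exact: dvdn_sub.
Qed.

Lemma odd_expm1 a : 0 < a -> odd (2 ^ a - 1).
Proof.
case: a => // a _; rewrite expnS.
have := expn_gt0 2 a; move: (2 ^ a) => X hX.
have -> : 2 * X - 1 = (X - 1).*2 + 1 by rewrite -muln2; lia.
by rewrite addn1 /= odd_double.
Qed.

Lemma sq_factor b : 2 ^ (b * 2) - 1 = (2 ^ b + 1) * (2 ^ b - 1).
Proof.
rewrite expnM; have := expn_gt0 2 b; move: (2 ^ b) => X hX.
rewrite expnS expn1; nia.
Qed.

Lemma LC a b : 0 < a -> (b = 0 \/ logn 2 a <= logn 2 b) ->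
  gcdn (2 ^ a - 1) (2 ^ b + 1) = 1.
Proof.
move=> a0 Hb; set d := gcdn _ _.
have da : d %| 2 ^ a - 1 by apply: dvdn_gcdl.
have db : d %| 2 ^ b + 1 by apply: dvdn_gcdr.
have d2 : d %| 2.
  case: Hb => [b0|Hl].
    by move: db; rewrite b0 expn0.
  case: (posnP b) => [b0|b0]; first by move: db; rewrite b0 expn0.
  apply: (@dvd_sub2 d b) => //.
  apply/S2_dvd.
  have [a' ca' Ea] := pfactor_coprime (isT : prime 2) a0.
  have Sa : S2 d a by apply/S2_dvd.
  have S2b : S2 d (b * 2).
    by apply/S2_dvd; rewrite sq_factor; apply: dvdn_mulr.
  have : 2 ^ logn 2 a %| b by rewrite pfactor_dvdn.
  case/dvdnP => t Et.
  have S3 : S2 d (b * a').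
    have -> : b * a' = a * t.
      move: Et Ea; move: (2 ^ logn 2 a) => X -> E; rewrite [in RHS]E; nia.
    exact: S2_mul.
  have := S2_gcd S3 S2b; rewrite -muln_gcdr.
  have -> : gcdn a' 2 = 1 by rewrite gcdnC; apply/eqP.
  by rewrite muln1.
have od : odd d.
  apply: (@dvdn_odd d (2 ^ a - 1)) => //; exact: odd_expm1.
have := dvdn_leq (isT : 0 < 2) d2.
have d0 : 0 < d by rewrite gcdn_gt0 addn1 orbT.
move=> dle; have [->|E] : d = 1 \/ d = 2 by lia.
  by []. by rewrite E in od.
Qed.

Lemma odd_pow_dvd x n : odd n -> (x + 1) %| x ^ n + 1.
Proof.
move=> on; case: (posnP x) => [->|x0]; first by rewrite dvd1n.
rewrite -(odd_double_half n) on add1n.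
elim: n./2 => [|m IH]; first by rewrite expn1.
have E : x ^ (m.+1).*2.+1 + 1 + (x ^ 2 - 1) = x ^ 2 * (x ^ m.*2.+1 + 1).
  rewrite doubleS !expnS; have := expn_gt0 x (m.*2); move: (x ^ m.*2) => Y hY.
  nia.
have h2 : x + 1 %| x ^ 2 - 1.
  have -> : x ^ 2 - 1 = (x + 1) * (x - 1).
    rewrite expnS expn1; nia.
  exact: dvdn_mulr.
rewrite -(dvdn_addl _ h2) E; exact: dvdn_mull.
Qed.

Lemma dvd_expm1 m n : m %| n -> 2 ^ m - 1 %| 2 ^ n - 1.
Proof.
case/dvdnP => t ->; apply/S2_dvd; rewrite mulnC; apply: S2_mul; apply/S2_dvd.
exact: dvdnn.
Qed.

Lemma LC' a b : 0 < a -> 0 < b -> logn 2 b < logn 2 a ->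
  gcdn (2 ^ a - 1) (2 ^ b + 1) != 1.
Proof.
move=> a0 b0 Hl.
have [b' cb' Eb] := pfactor_coprime (isT : prime 2) b0.
set c := 2 ^ logn 2 b in Eb.
have ca : c * 2 %| a.
  by rewrite /c -expnSr pfactor_dvdn.
have h1 : 2 ^ c + 1 %| 2 ^ a - 1.
  apply: dvdn_trans (dvd_expm1 ca); rewrite sq_factor; exact: dvdn_mulr.
have h2 : 2 ^ c + 1 %| 2 ^ b + 1.
  rewrite Eb mulnC expnM; apply: odd_pow_dvd; by rewrite -coprime2n.
have : 2 ^ c + 1 %| gcdn (2 ^ a - 1) (2 ^ b + 1) by rewrite dvdn_gcd h1 h2.
apply: contraL => /eqP ->.
rewrite dvdn1; have : 0 < 2 ^ c by rewrite expn_gt0. lia.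
Qed.

Lemma ole_iff k l : 0 < k ->
  ole (ord2 k) (ord2 l) <-> (l = 0 \/ logn 2 k <= logn 2 l).
Proof.
move=> k0; rewrite /ord2 /ole; have -> : (k == 0) = false by lia.
case: l => [|l] /=; first by split => // _; left.
by split; [right | case].
Qed.

Lemma part2 p k l : prime p -> 0 < k ->
  (gcdn (p ^ k - 1) (p ^ l + 1) = 1 <-> p = 2 /\ ole (ord2 k) (ord2 l)).
Proof.
move=> pp k0; rewrite ole_iff //; split.
  move=> H.
  have p2 : p = 2.
    case: (even_prime pp) => // op.
    have h1 : 2 %| p ^ k - 1.
      have : odd (p ^ k) by rewrite oddX op orbT.
      move: (p ^ k) => X oX; rewrite -(odd_double_half X) oX.
      apply/dvdnP; exists (X./2); rewrite -!muln2; lia.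
    have h2 : 2 %| p ^ l + 1.
      have : odd (p ^ l) by rewrite oddX op orbT.
      move: (p ^ l) => X oX; rewrite -(odd_double_half X) oX.
      apply/dvdnP; exists (X./2).+1; rewrite -!muln2; lia.
    have : 2 %| gcdn (p ^ k - 1) (p ^ l + 1) by rewrite dvdn_gcd h1 h2.
    by rewrite H.
  split => //; subst p.
  case: (posnP l) => [->|l0]; first by left.
  right; rewrite leqNgt; apply/negP => Hl.
  by move: (LC' k0 l0 Hl); rewrite H.
by case => ->; apply: LC.
Qed.

Lemma logodd n : odd n -> logn 2 n = 0.
Proof. by move=> on; apply: logn_coprime; rewrite coprime2n. Qed.

Lemma logeven n : 0 < n -> ~~ odd n -> 1 <= logn 2 n.
Proof. by move=> n0 en; rewrite -pfactor_dvdn // expn1 dvdn2. Qed.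

Lemma nt_hyps k l : 0 < k -> gcdn (2 ^ k - 1) (2 ^ l + 1) = 1 ->
  [/\ gcdn (2 ^ (k * 3) - 1) (2 ^ l + 1) = 1,
      (~~ odd k -> ~~ odd l -> coprime (2 ^ k - 1) (2 ^ l + 1)),
      (odd k -> ~~ odd l -> coprime (2 ^ k + 1) (2 ^ l + 1)),
      (odd k -> odd l -> coprime (2 ^ k + 1) (2 ^ l - 1)) &
      (~~ odd k -> ~~ odd l)].
Proof.
move=> k0 H.
have [_ hl] := (part2 l (isT : prime 2) k0).1 H.
move/(ole_iff l k0): hl => hl.
split.
- apply: LC; first by rewrite muln_gt0 k0.
  case: hl => [->|hl]; [by left | right].
  by rewrite lognM // (logodd (isT : odd 3)) addn0.
- by move=> _ _; apply/eqP.
- move=> ok el.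
  have h : gcdn (2 ^ (k * 2) - 1) (2 ^ l + 1) = 1.
    apply: LC; first by rewrite muln_gt0 k0.
    case: (posnP l) => [->|l0]; [by left | right].
    rewrite lognM // (logodd ok) add0n.
    have -> : logn 2 2 = 1 by [].
    exact: logeven.
  apply: (@coprime_dvdl _ (2 ^ (k * 2) - 1)); last by apply/eqP.
  by rewrite sq_factor dvdn_mulr.
- move=> ok ol; rewrite coprime_sym; apply/eqP; apply: LC.
    by case: l ol {hl H}.
  by right; rewrite (logodd ol).
- move=> ek; apply/negP => ol.
  have l0 : 0 < l by case: l ol {hl H}.
  case: hl => [l00|]; first by rewrite l00 in l0.
  by rewrite (logodd ol) leqn0 => /eqP E; have := logeven k0 ek; rewrite E.
Qed.

Import GRing.Theory.
Local Open Scope ring_scope.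

Lemma pnat_pow (K : fieldType) p n : p \in [pchar K] -> [pchar K].-nat (p ^ n)%N.
Proof. move=> hp; rewrite pnatX pnatE ?hp //; exact: pcharf_prime hp. Qed.

Lemma pnat_gt0' (K : fieldType) e : [pchar K].-nat e -> (0 < e)%N.
Proof. by case/andP. Qed.

Lemma frobD (K : fieldType) e (x y : K) : [pchar K].-nat e ->
  (x + y) ^+ e = x ^+ e + y ^+ e.
Proof. exact: exprDn_pchar. Qed.

Lemma frobN (K : fieldType) e (x : K) : [pchar K].-nat e -> (- x) ^+ e = - x ^+ e.
Proof.
move=> he; have H : x ^+ e + (- x) ^+ e = 0.
  rewrite -frobD // subrr expr0n; have := pnat_gt0' he; case: e {he} => //.
by apply/eqP; rewrite -addr_eq0 addrC H.
Qed.

Lemma frobB (K : fieldType) e (x y : K) : [pchar K].-nat e ->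
  (x - y) ^+ e = x ^+ e - y ^+ e.
Proof. by move=> he; rewrite frobD // frobN. Qed.

Lemma expU (K : fieldType) (t : K) a b : coprime a b -> t ^+ a = 1 -> t ^+ b = 1 -> t = 1.
Proof.
case: (posnP a) => [->|a0].
  by rewrite /coprime gcd0n => /eqP -> _; rewrite expr1.
move=> cab ta tb; have [x _ Hx] := Bezoutl b a0.
move: cab; rewrite /coprime => /eqP g1; rewrite g1 in Hx.
have E : (1 + x * b = (1 + x * b) %/ a * a)%N by rewrite divnK.
have : t ^+ (1 + x * b)%N = 1 by rewrite E mulnC exprM ta expr1n.
by rewrite exprD mulnC exprM tb expr1n mulr1 expr1.
Qed.

Lemma expU2 (K : fieldType) (X Y : K) a b : coprime a b -> Y != 0 ->
  X ^+ a = Y ^+ a -> X ^+ b = Y ^+ b -> X = Y.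
Proof.
move=> cab Y0 ha hb.
have : X / Y = 1.
  apply: (expU cab); rewrite expr_div_n ?ha ?hb divff // expf_neq0 //.
by move/(congr1 (fun z => z * Y)); rewrite mul1r divfK.
Qed.

Lemma c2 (L : fieldType) (w a b W V : L) : 2 \in [pchar L] -> w ^+ 2 + w + 1 = 0 ->
  a - b = 2%:R * W + (w ^+ 2 + w + 1) * V -> a = b.
Proof. by move=> h2 hw; rewrite hw mul0r addr0 (pcharf0 h2) mul0r => /subr0_eq. Qed.

Lemma c2add (L : fieldType) (a b : L) : 2 \in [pchar L] -> a + b = 0 -> a = b.
Proof. by move=> h2 /eqP; rewrite addr_eq0 (oppr_pchar2 h2) => /eqP. Qed.

Lemma w_frob (L : fieldType) (w : L) n : 2 \in [pchar L] -> w ^+ 2 + w + 1 = 0 ->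
  w ^+ (2 ^ n)%N = if odd n then w + 1 else w.
Proof.
move=> h2 hw; have w2 : w ^+ 2 = w + 1.
  by apply: (c2 (W := - w - 1) (V := 1) h2 hw); ring.
elim: n => [|n IH]; first by rewrite expr1.
rewrite expnSr exprM IH /=; case: (odd n) => /=; last by [].
rewrite (frobD _ _ (pnat_pow 1 h2)) w2 expr1n.
by apply: (c2 (W := 1) (V := 0) h2 hw); ring.
Qed.

Lemma roots (L : fieldType) (k l : nat) (w r s : L) :
  2 \in [pchar L] -> w ^+ 2 + w + 1 = 0 -> (0 < k)%N ->
  (~~ odd k -> ~~ odd l -> coprime (2 ^ k - 1) (2 ^ l + 1)) ->
  (odd k -> ~~ odd l -> coprime (2 ^ k + 1) (2 ^ l + 1)) ->
  (odd k -> odd l -> coprime (2 ^ k + 1) (2 ^ l - 1)) ->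
  (~~ odd k -> ~~ odd l) ->
  r ^+ (2 ^ k + 1) = 1 + r -> s ^+ (2 ^ k + 1) = 1 + s ->
  (r ^+ (2 ^ l + 1) - 1) * ((1 + s) ^+ (2 ^ l + 1) - 1) =
    (s ^+ (2 ^ l + 1) - 1) * ((1 + r) ^+ (2 ^ l + 1) - 1) ->
  r = s.
Proof.
move=> h2 hw k0 c1 c2' c3 c4 hr hs hd.
set q := (2 ^ k)%N in c1 c2' c3 hr hs.
set Q := (2 ^ l)%N in c1 c2' c3 hd.
have pq : [pchar L].-nat q := pnat_pow k h2.
have pQ : [pchar L].-nat Q := pnat_pow l h2.
have q0 : (0 < q)%N by rewrite expn_gt0.
have Q0 : (0 < Q)%N by rewrite expn_gt0.
have hr' : r * r ^+ q = 1 + r by rewrite -hr addn1 exprS.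
have hs' : s * s ^+ q = 1 + s by rewrite -hs addn1 exprS.
have r0 : r != 0.
  by apply/eqP => r0; move: hr'; rewrite r0 mul0r addr0 => /eqP; rewrite eq_sym oner_eq0.
have s0 : s != 0.
  by apply/eqP => s0; move: hs'; rewrite s0 mul0r addr0 => /eqP; rewrite eq_sym oner_eq0.
have rs0 : r * s != 0 by rewrite mulf_neq0.
have eQ (x : L) : x ^+ (Q + 1) = x ^+ Q * x by rewrite addn1 exprSr.
move: hd; rewrite !eQ !frobD // expr1n.
set R1 := r ^+ Q; set S1 := s ^+ Q => hd.
pose P := (r+w)*(R1+w)*(s+(w+1))*(S1+(w+1)) + (s+w)*(S1+w)*(r+(w+1))*(R1+(w+1)).
have hP : P = 0.
  have -> : 0 = (R1 * r - 1) * ((1 + S1) * (1 + s) - 1) - (S1 * s - 1) * ((1 + R1) * (1 + r) - 1).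
    by rewrite hd subrr.
  apply: (c2 h2 hw
   (W:=(1 - S1*w - s*w - R1 - R1*w - R1*S1 - R1*s + R1*s*S1 + R1*s*S1*w - r - r*w - r*S1 - r*s + r*s*S1 + r*s*S1*w - r*R1 + r*R1*S1*w + r*R1*s*w + r*R1*s*S1))
   (V:=(- 2%:R + 2%:R*w + 2%:R*w^+2 + S1 + 2%:R*S1*w + s + 2%:R*s*w + 2%:R*s*S1 + R1 + 2%:R*R1*w + 2%:R*R1*S1 + 2%:R*R1*s + r + 2%:R*r*w + 2%:R*r*S1 + 2%:R*r*s + 2%:R*r*R1))).
  rewrite /P; ring.
pose X := (r+w)*(s+(w+1)); pose Y := (s+w)*(r+(w+1)).
suff XY : X = Y.
  have E : X - Y = r - s by rewrite /X /Y; ring.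
  by apply/eqP; rewrite -subr_eq0 -E XY subrr.
have Xq : X ^+ q = (r ^+ q + w ^+ q) * (s ^+ q + (w ^+ q + 1)).
  by rewrite /X exprMn !frobD // expr1n.
have Yq : Y ^+ q = (s ^+ q + w ^+ q) * (r ^+ q + (w ^+ q + 1)).
  by rewrite /Y exprMn !frobD // expr1n.
have XQ : X ^+ Q = (R1 + w ^+ Q) * (S1 + (w ^+ Q + 1)).
  by rewrite /X exprMn !frobD // expr1n.
have YQ : Y ^+ Q = (S1 + w ^+ Q) * (R1 + (w ^+ Q + 1)).
  by rewrite /Y exprMn !frobD // expr1n.
have wq : w ^+ q = if odd k then w + 1 else w by exact: w_frob.
have wQ : w ^+ Q = if odd l then w + 1 else w by exact: w_frob.
have Xnz : X ^+ (q + 1) = Y ^+ (q + 1) -> Y != 0 -> X != 0.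
  move=> E Y0; apply/negP => /eqP X0; move: E; rewrite X0 expr0n addn1 /=.
  by move/eqP; rewrite eq_sym expf_eq0 /= (negPf Y0).
have fin_odd : odd k -> r * s * X ^+ q = Y -> r * s * Y ^+ q = X ->
    X ^+ (q + 1) = Y ^+ (q + 1).
  move=> _ e1 e2; apply: (mulfI rs0).
  have -> : r * s * (X ^+ (q + 1)) = (r * s * X ^+ q) * X by rewrite addn1 exprSr; ring.
  have -> : r * s * (Y ^+ (q + 1)) = (r * s * Y ^+ q) * Y by rewrite addn1 exprSr; ring.
  by rewrite e1 e2 mulrC.
case ok: (odd k); case ol: (odd l); rewrite ok in wq; rewrite ol in wQ.
- have e1 : r * s * X ^+ q = Y.
    rewrite Xq wq.
    have -> : r * s * ((r ^+ q + (w + 1)) * (s ^+ q + (w + 1 + 1))) =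
      (r * r ^+ q + r * (w + 1)) * (s * s ^+ q + s * (w + 1 + 1)) by ring.
    rewrite hr' hs'; apply: (c2 h2 hw (W:=(1 + s + r + 2%:R*r*s + 2%:R*r*s*w)) (V:=(- 1 + r*s))).
    rewrite /Y; ring.
  have e2 : r * s * Y ^+ q = X.
    rewrite Yq wq.
    have -> : r * s * ((s ^+ q + (w + 1)) * (r ^+ q + (w + 1 + 1))) =
      (s * s ^+ q + s * (w + 1)) * (r * r ^+ q + r * (w + 1 + 1)) by ring.
    rewrite hr' hs'; apply: (c2 h2 hw (W:=(1 + s + r + 2%:R*r*s + 2%:R*r*s*w)) (V:=(- 1 + r*s))).
    rewrite /X; ring.
  have ef := fin_odd ok e1 e2.
  have e3 : X * Y ^+ Q = Y * X ^+ Q.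
    have : P = X * Y ^+ Q + Y * X ^+ Q.
      rewrite YQ XQ wQ.
      apply: (c2 h2 hw (W:=(2%:R + 2%:R*w + S1 + s - s*w - s*S1*w + R1 - R1*s - R1*s*w + r - r*w - r*S1 - r*S1*w - 2%:R*r*s - 2%:R*r*s*w - r*s*S1 - r*R1*w - r*R1*s)) (V:=(- 4%:R - 4%:R*w - 2%:R*S1 - 4%:R*s - 2%:R*R1 - 4%:R*r))).
      rewrite /P /X /Y; ring.
    by rewrite hP => /esym /(c2add h2).
  have [Y0|Y0] := eqVneq Y 0.
    move: ef; rewrite Y0 expr0n addn1 /= => /eqP; rewrite expf_eq0 /= => /eqP ->.
    by [].
  have X0 := Xnz ef Y0.
  have pw (Z : L) : Z ^+ Q = Z * Z ^+ (Q - 1) by rewrite -exprS subn1 prednK.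
  have e4 : X ^+ (Q - 1) = Y ^+ (Q - 1).
    apply: (mulfI (mulf_neq0 X0 Y0)).
    have -> : X * Y * X ^+ (Q - 1) = Y * X ^+ Q by rewrite (pw X); ring.
    have -> : X * Y * Y ^+ (Q - 1) = X * Y ^+ Q by rewrite (pw Y); ring.
    by rewrite e3.
  exact: (expU2 (c3 ok ol) Y0 ef e4).
- have e1 : r * s * X ^+ q = Y.
    rewrite Xq wq.
    have -> : r * s * ((r ^+ q + (w + 1)) * (s ^+ q + (w + 1 + 1))) =
      (r * r ^+ q + r * (w + 1)) * (s * s ^+ q + s * (w + 1 + 1)) by ring.
    rewrite hr' hs'; apply: (c2 h2 hw (W:=(1 + s + r + 2%:R*r*s + 2%:R*r*s*w)) (V:=(- 1 + r*s))).
    rewrite /Y; ring.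
  have e2 : r * s * Y ^+ q = X.
    rewrite Yq wq.
    have -> : r * s * ((s ^+ q + (w + 1)) * (r ^+ q + (w + 1 + 1))) =
      (s * s ^+ q + s * (w + 1)) * (r * r ^+ q + r * (w + 1 + 1)) by ring.
    rewrite hr' hs'; apply: (c2 h2 hw (W:=(1 + s + r + 2%:R*r*s + 2%:R*r*s*w)) (V:=(- 1 + r*s))).
    rewrite /X; ring.
  have ef := fin_odd ok e1 e2.
  have e3 : X ^+ (Q + 1) = Y ^+ (Q + 1).
    have : P = X ^+ (Q + 1) + Y ^+ (Q + 1).
      by rewrite !eQ XQ YQ wQ /P /X /Y; ring.
    by rewrite hP => /esym /(c2add h2).
  have [Y0|Y0] := eqVneq Y 0.
    move: ef; rewrite Y0 expr0n addn1 /= => /eqP; rewrite expf_eq0 /= => /eqP ->.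
    by [].
  exact: (expU2 (c2' ok (negbT ol)) Y0 ef e3).
- by move: (c4 (negbT ok)); rewrite ol.
- have e1 : r * s * X ^+ q = X.
    rewrite Xq wq.
    have -> : r * s * ((r ^+ q + w) * (s ^+ q + (w + 1))) =
      (r * r ^+ q + r * w) * (s * s ^+ q + s * (w + 1)) by ring.
    rewrite hr' hs'; apply: (c2 h2 hw (W:=(1 + s + r*s*w)) (V:=(- 1 + r*s))).
    rewrite /X; ring.
  have e2 : r * s * Y ^+ q = Y.
    rewrite Yq wq.
    have -> : r * s * ((s ^+ q + w) * (r ^+ q + (w + 1))) =
      (s * s ^+ q + s * w) * (r * r ^+ q + r * (w + 1)) by ring.
    rewrite hr' hs'; apply: (c2 h2 hw (W:=(1 + r + r*s*w)) (V:=(- 1 + r*s))).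
    rewrite /Y; ring.
  have e3 : X ^+ (Q + 1) = Y ^+ (Q + 1).
    have : P = X ^+ (Q + 1) + Y ^+ (Q + 1).
      by rewrite !eQ XQ YQ wQ /P /X /Y; ring.
    by rewrite hP => /esym /(c2add h2).
  have [Y0|Y0] := eqVneq Y 0.
    move: e3; rewrite Y0 expr0n addn1 /= => /eqP; rewrite expf_eq0 /= => /eqP ->.
    by [].
  have X0 : X != 0.
    apply/negP => /eqP X0; move: e3; rewrite X0 expr0n addn1 /= => /eqP.
    by rewrite eq_sym expf_eq0 /= (negPf Y0).
  have e5 : X ^+ q * Y = X * Y ^+ q.
    apply: (mulfI rs0).
    have -> : r * s * (X ^+ q * Y) = (r * s * X ^+ q) * Y by ring.
    have -> : r * s * (X * Y ^+ q) = X * (r * s * Y ^+ q) by ring.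
    by rewrite e1 e2.
  have pw (Z : L) : Z ^+ q = Z * Z ^+ (q - 1) by rewrite -exprS subn1 prednK.
  have e4 : X ^+ (q - 1) = Y ^+ (q - 1).
    apply: (mulfI (mulf_neq0 X0 Y0)).
    have -> : X * Y * X ^+ (q - 1) = X ^+ q * Y by rewrite (pw X); ring.
    have -> : X * Y * Y ^+ (q - 1) = X * Y ^+ q by rewrite (pw Y); ring.
    by rewrite e5.
  exact: (expU2 (c1 (negbT ok) (negbT ol)) Y0 e4 e3).
Qed.

Lemma unit_pow (F : finFieldType) (X : F) : X != 0 -> X ^+ #|F|.-1 = 1.
Proof.
move=> X0; apply: (mulfI X0); rewrite mulr1 -exprS prednK ?expf_card //.
exact: (ltn_trans _ (finNzRing_gt1 F)).
Qed.

Lemma powinj (F : finFieldType) e (X Y : F) : (0 < e)%N -> coprime #|F|.-1 e ->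
  X ^+ e = Y ^+ e -> X = Y.
Proof.
move=> e0 ce E; have [Y0|Y0] := eqVneq Y 0.
  by move: E; rewrite Y0 expr0n; case: e e0 {ce} => // e _ /eqP; rewrite expf_eq0 => /andP [_ /eqP].
have X0 : X != 0.
  by apply/negP => /eqP X0; move: E; rewrite X0 expr0n; case: e e0 {ce} => // e _ /eqP; rewrite eq_sym expf_eq0 (negPf Y0) andbF.
by apply: (expU2 ce Y0 _ E); rewrite !unit_pow.
Qed.

Lemma ev_f5 (F : finFieldType) p k l m (x : F) : p \in [pchar F] ->
  (f5 F (p ^ k) (p ^ l) (p ^ m)).[x] =
  (x ^+ (p ^ k) - x) ^+ (p ^ l + 1) + (x ^+ ((p ^ k) ^ 2) + x ^+ (p ^ k) + x) ^+ (p ^ m).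
Proof.
move=> hp; set q := (p ^ k)%N; set Q := (p ^ l)%N; set R := (p ^ m)%N.
have pq : [pchar F].-nat q := pnat_pow k hp.
have pQ : [pchar F].-nat Q := pnat_pow l hp.
have pR : [pchar F].-nat R := pnat_pow m hp.
rewrite /f5 !hornerE.
have E1 : (x ^+ q - x) ^+ (Q + 1) = ((x ^+ q) ^+ Q - x ^+ Q) * (x ^+ q - x).
  by rewrite addn1 exprSr frobB.
rewrite E1 !frobD // -!exprM !exprD !expr1.
ring.
Qed.

Definition Tr (F : fieldType) (q : nat) (x : F) := x ^+ (q ^ 2) + x ^+ q + x.

Lemma rs_eq (F : finFieldType) (k l : nat) (r s : F) :
  2 \in [pchar F] -> (0 < k)%N ->
  (~~ odd k -> ~~ odd l -> coprime (2 ^ k - 1) (2 ^ l + 1)) ->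
  (odd k -> ~~ odd l -> coprime (2 ^ k + 1) (2 ^ l + 1)) ->
  (odd k -> odd l -> coprime (2 ^ k + 1) (2 ^ l - 1)) ->
  (~~ odd k -> ~~ odd l) ->
  r ^+ (2 ^ k + 1) = 1 + r -> s ^+ (2 ^ k + 1) = 1 + s ->
  (r ^+ (2 ^ l + 1) - 1) * ((1 + s) ^+ (2 ^ l + 1) - 1) =
    (s ^+ (2 ^ l + 1) - 1) * ((1 + r) ^+ (2 ^ l + 1) - 1) ->
  r = s.
Proof.
move=> h2 k0 c1 c2' c3 c4 hr hs hd.
have [L [f _]] := countable_algebraic_closure F.
have h2L : 2 \in [pchar L] by rewrite (rmorph_pchar f).
have [w hw] : exists w : L, w ^+ 2 + w + 1 = 0.
  pose pp : {poly L} := 'X^(2) + 'X + 1.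
  have : size pp != 1%N.
    by rewrite /pp -addrA size_addl ?size_polyXn // size_XaddC.
  case/closed_rootP => w; rewrite rootE /pp !hornerE => /eqP hw; by exists w.
apply: (fmorph_inj f).
apply: (roots h2L hw k0 c1 c2' c3 c4).
- by rewrite -rmorphXn hr rmorphD rmorph1.
- by rewrite -rmorphXn hs rmorphD rmorph1.
- by have := congr1 f hd; rewrite !rmorphM !rmorphB !rmorphXn !rmorphD !rmorph1.
Qed.

Lemma pnat_sq (K : fieldType) q : [pchar K].-nat q -> [pchar K].-nat (q ^ 2)%N.
Proof. by move=> pq; rewrite pnatX pq. Qed.

Lemma Tr_fix (F : finFieldType) q (x : F) : [pchar F].-nat q -> #|F| = (q ^ 3)%N ->
  (Tr q x) ^+ q = Tr q x.
Proof.
move=> pq cF; rewrite /Tr !frobD // -!exprM.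
have -> : (q ^ 2 * q = #|F|)%N by rewrite cF -expnSr.
by rewrite expf_card mulnn; ring.
Qed.

Lemma Tr_sub (F : finFieldType) q (x : F) : [pchar F].-nat q -> #|F| = (q ^ 3)%N ->
  Tr q (x ^+ q - x) = 0.
Proof.
move=> pq cF; rewrite /Tr !frobB ?pnat_sq // -!exprM.
have -> : (q * q ^ 2 = #|F|)%N by rewrite cF mulnC -expnSr.
by rewrite expf_card mulnn; ring.
Qed.

Lemma rootsF (F : fieldType) q (w0 : F) : 2 \in [pchar F] -> [pchar F].-nat q ->
  w0 != 0 -> Tr q w0 = 0 ->
  [/\ (w0 ^+ q / w0) ^+ (q + 1) = 1 + w0 ^+ q / w0,
      w0 ^+ q = w0 * (w0 ^+ q / w0) &
      w0 ^+ (q ^ 2) = w0 * (1 + w0 ^+ q / w0)].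
Proof.
move=> h2 pq nz T0.
have w2 : w0 ^+ (q ^ 2) = w0 ^+ q + w0.
  by apply: (c2add h2); rewrite addrA; exact: T0.
have e1 : w0 ^+ q = w0 * (w0 ^+ q / w0) by rewrite mulrC divfK.
have wq0 : w0 ^+ q != 0 by rewrite expf_neq0.
split => //; last by rewrite w2 mulrDr mulr1 -e1 addrC.
rewrite addn1 exprSr expr_div_n -exprM mulnn w2.
by rewrite mulrA divfK // mulrDl divff // addrC.
Qed.

Lemma keyF (F : finFieldType) (k l : nat) (y1 y2 : F) :
  2 \in [pchar F] -> #|F| = ((2 ^ k) ^ 3)%N -> (0 < k)%N ->
  coprime #|F|.-1 (2 ^ l + 1) ->
  (~~ odd k -> ~~ odd l -> coprime (2 ^ k - 1) (2 ^ l + 1)) ->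
  (odd k -> ~~ odd l -> coprime (2 ^ k + 1) (2 ^ l + 1)) ->
  (odd k -> odd l -> coprime (2 ^ k + 1) (2 ^ l - 1)) ->
  (~~ odd k -> ~~ odd l) ->
  Tr (2 ^ k) y1 = 0 -> Tr (2 ^ k) y2 = 0 ->
  (y1 ^+ (2 ^ l + 1) - y2 ^+ (2 ^ l + 1)) ^+ (2 ^ k) = y1 ^+ (2 ^ l + 1) - y2 ^+ (2 ^ l + 1) ->
  y1 = y2.
Proof.
move=> h2 cF k0 cQ c1 c2' c3 c4 T1 T2 hc.
have hrs := rs_eq h2 k0 c1 c2' c3 c4.
set q := (2 ^ k)%N in cF T1 T2 hc hrs.
set Q := (2 ^ l)%N in cQ hc hrs.
have pq : [pchar F].-nat q := pnat_pow k h2.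
have pQ : [pchar F].-nat Q := pnat_pow l h2.
have Q1 : (0 < Q + 1)%N by rewrite addn1.
have one2 : (1 : F) + 1 = 0 by rewrite addrr_pchar2.
have notone (r : F) : r ^+ (q + 1) = 1 + r -> r ^+ (Q + 1) != 1.
  move=> hr; apply/eqP => h1.
  have r1 : r = 1 by apply: (powinj Q1 cQ); rewrite h1 expr1n.
  by move: hr; rewrite r1 expr1n one2 => /eqP; rewrite oner_eq0.
have Aq (w0 : F) : w0 ^+ q = w0 * (w0 ^+ q / w0) ->
    (w0 ^+ (Q + 1)) ^+ q = w0 ^+ (Q + 1) * (w0 ^+ q / w0) ^+ (Q + 1).
  by move=> e; rewrite exprAC {1}e exprMn.
have [c0|c0] := eqVneq (y1 ^+ (Q + 1) - y2 ^+ (Q + 1)) 0.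
  by apply: (powinj Q1 cQ); apply/eqP; rewrite -subr_eq0 c0.
exfalso.
have [y10|y10] := eqVneq y1 0.
  have y20 : y2 != 0.
    by apply: contra_neq c0 => ->; rewrite y10 expr0n addn1 /= subrr.
  have [hs e1 _] := rootsF h2 pq y20 T2.
  move: hc; rewrite y10 expr0n addn1 /= sub0r frobN // -addn1 => /oppr_inj.
  rewrite Aq // => E.
  have : y2 ^+ (Q + 1) * (y2 ^+ q / y2) ^+ (Q + 1) = y2 ^+ (Q + 1) * 1 by rewrite mulr1.
  by move/(mulfI (expf_neq0 _ y20))/eqP; apply/negP; apply: notone.
have [y20|y20] := eqVneq y2 0.
  have [hr e1 _] := rootsF h2 pq y10 T1.
  move: hc; rewrite y20 expr0n addn1 /= subr0 -addn1.
  rewrite Aq // => E.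
  have : y1 ^+ (Q + 1) * (y1 ^+ q / y1) ^+ (Q + 1) = y1 ^+ (Q + 1) * 1 by rewrite mulr1.
  by move/(mulfI (expf_neq0 _ y10))/eqP; apply/negP; apply: notone.
have [hr e1 e1'] := rootsF h2 pq y10 T1.
have [hs e2 e2'] := rootsF h2 pq y20 T2.
move: hr hs e1 e2 e1' e2' hc.
set r := y1 ^+ q / y1; set s := y2 ^+ q / y2.
move=> hr hs e1 e2 e1' e2' hc.
set A := y1 ^+ (Q + 1) in c0 hc; set C := y2 ^+ (Q + 1) in c0 hc.
have A0 : A != 0 by rewrite expf_neq0.
have E1 : A * (r ^+ (Q + 1) - 1) = C * (s ^+ (Q + 1) - 1).
  move: hc; rewrite frobB // Aq // Aq // => hc.
  apply/eqP; rewrite -subr_eq0; apply/eqP.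
  have -> : A * (r ^+ (Q + 1) - 1) - C * (s ^+ (Q + 1) - 1) =
    (A * r ^+ (Q + 1) - C * s ^+ (Q + 1)) - (A - C) by ring.
  by rewrite hc subrr.
have E2 : A * ((1 + r) ^+ (Q + 1) - 1) = C * ((1 + s) ^+ (Q + 1) - 1).
  have hc2 : (A - C) ^+ (q ^ 2) = A - C by rewrite -mulnn exprM hc hc.
  move: hc2; rewrite frobB ?pnat_sq // /A /C !(exprAC _ (Q + 1)) e1' e2' !exprMn.
  rewrite -/A -/C => hc2.
  apply/eqP; rewrite -subr_eq0; apply/eqP.
  have -> : A * ((1 + r) ^+ (Q + 1) - 1) - C * ((1 + s) ^+ (Q + 1) - 1) =
    (A * (1 + r) ^+ (Q + 1) - C * (1 + s) ^+ (Q + 1)) - (A - C) by ring.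
  by rewrite hc2 subrr.
have hd : (r ^+ (Q + 1) - 1) * ((1 + s) ^+ (Q + 1) - 1) =
    (s ^+ (Q + 1) - 1) * ((1 + r) ^+ (Q + 1) - 1).
  apply: (mulfI A0).
  have -> : A * ((r ^+ (Q + 1) - 1) * ((1 + s) ^+ (Q + 1) - 1)) =
    (A * (r ^+ (Q + 1) - 1)) * ((1 + s) ^+ (Q + 1) - 1) by ring.
  have -> : A * ((s ^+ (Q + 1) - 1) * ((1 + r) ^+ (Q + 1) - 1)) =
    (A * ((1 + r) ^+ (Q + 1) - 1)) * (s ^+ (Q + 1) - 1) by ring.
  by rewrite E1 E2; ring.
have rs := hrs r s hr hs hd.
move: E1; rewrite -rs => /(mulIf _) AC.
have : A = C.
  apply: AC; rewrite subr_eq0; exact: notone.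
by move=> AC'; move: c0; rewrite AC' subrr eqxx.
Qed.

Lemma Tr_lin (F : fieldType) q (x y : F) : [pchar F].-nat q ->
  Tr q (x - y) = Tr q x - Tr q y.
Proof. by move=> pq; rewrite /Tr !frobB ?pnat_sq //; ring. Qed.

Lemma perm_if (F : finFieldType) k l m : #|F| = ((2 ^ k) ^ 3)%N -> (0 < k)%N ->
  gcdn (2 ^ k - 1) (2 ^ l + 1) = 1%N -> permutes (f5 F (2 ^ k) (2 ^ l) (2 ^ m)).
Proof.
move=> cF k0 H.
have [cQ c1 c2' c3 c4] := nt_hyps k0 H.
have h2 : 2 \in [pchar F].
  by apply: (@card_finPcharP _ _ (k * 3)) => //; rewrite cF expnM.
have cQ' : coprime #|F|.-1 (2 ^ l + 1).
  by rewrite cF -expnM -subn1; apply/eqP.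
have key := keyF h2 cF k0 cQ' c1 c2' c3 c4.
set q := (2 ^ k)%N in cF key; set Q := (2 ^ l)%N in key; set R := (2 ^ m)%N.
have pq : [pchar F].-nat q := pnat_pow k h2.
have pR : [pchar F].-nat R := pnat_pow m h2.
apply: injF_bij => x x' /=; rewrite !ev_f5 //.
rewrite -/q -/Q -/R -/(Tr q x) -/(Tr q x').
set y := x ^+ q - x; set y' := x' ^+ q - x'.
set a := Tr q x; set a' := Tr q x' => E.
have Ty : Tr q y = 0 by exact: Tr_sub.
have Ty' : Tr q y' = 0 by exact: Tr_sub.
have hc : y ^+ (Q + 1) - y' ^+ (Q + 1) = a' ^+ R - a ^+ R.
  have -> : y ^+ (Q + 1) - y' ^+ (Q + 1) =
    (y ^+ (Q + 1) + a ^+ R) - (y' ^+ (Q + 1) + a ^+ R) by ring.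
  by rewrite E; ring.
have yy : y = y'.
  apply: key => //; rewrite hc frobB // !(exprAC _ R) !Tr_fix //.
have aa : a = a'.
  move: hc; rewrite yy subrr => /esym /eqP; rewrite subr_eq0 => /eqP hR.
  apply/eqP; rewrite -subr_eq0; apply/eqP.
  have : (a - a') ^+ R = 0 by rewrite frobB // hR subrr.
  by move/eqP; rewrite expf_eq0 => /andP [_ /eqP].
set z := x - x'.
have zq : z ^+ q = z.
  rewrite /z frobB //.
  have -> : x ^+ q - x' ^+ q = (x ^+ q - x) - (x' ^+ q - x') + (x - x') by ring.
  by rewrite -/y -/y' yy subrr add0r.
have Tz : Tr q z = 0 by rewrite /z Tr_lin // -/a -/a' aa subrr.
move: Tz; rewrite /Tr -mulnn exprM zq zq (addrr_pchar2 h2) add0r => z0.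
by apply/eqP; rewrite -subr_eq0 -/z z0.
Qed.

Lemma perm_only (F : finFieldType) p k l m : prime p -> (0 < k)%N ->
  #|F| = ((p ^ k) ^ 3)%N -> permutes (f5 F (p ^ k) (p ^ l) (p ^ m)) ->
  gcdn (p ^ k - 1) (p ^ l + 1) = 1%N.
Proof.
move=> pp k0 cF hperm.
have hp : p \in [pchar F].
  by apply: (@card_finPcharP _ _ (k * 3)) => //; rewrite cF expnM.
set q := (p ^ k)%N in cF hperm *; set Q := (p ^ l)%N in hperm *.
set R := (p ^ m)%N in hperm.
have pq : [pchar F].-nat q := pnat_pow k hp.
have pR : [pchar F].-nat R := pnat_pow m hp.
have q2 : (2 <= q)%N.
  have p1 := prime_gt1 pp.
  have : (p ^ 1 <= p ^ k)%N by rewrite leq_exp2l.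
  rewrite expn1 /q; lia.
apply/eqP; apply/negP => Hd; set d := gcdn _ _ in Hd.
have d0 : (0 < d)%N by rewrite gcdn_gt0 addn1 orbT.
have d1 : (1 < d)%N by lia.
set n := #|F|.-1.
have nE : n = (q ^ 3 - 1)%N by rewrite /n cF subn1.
have n0 : (0 < n)%N.
  rewrite nE; have : (2 ^ 3 <= q ^ 3)%N by rewrite leq_exp2r.
  lia.
have dq : (d %| q - 1)%N by apply: dvdn_gcdl.
have dQ : (d %| Q + 1)%N by apply: dvdn_gcdr.
have qn : (q - 1 %| n)%N.
  rewrite nE; apply/dvdnP; exists (q ^ 2 + q + 1)%N.
  rewrite !expnS expn0; nia.
have dn : (d %| n)%N := dvdn_trans dq qn.
pose rs := enum [pred x : F | x != 0].
have : has n.-primitive_root rs.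
  apply: has_prim_root => //.
  - by apply/allP => x; rewrite mem_enum /= => xnz; rewrite unity_rootE unit_pow.
  - exact: enum_uniq.
  - by rewrite -cardE (cardC1 (0 : F)).
case/hasP => g; rewrite mem_enum /= => g0 gprim.
set c := g ^+ (n %/ d).
have c1 : c != 1.
  rewrite /c -(prim_order_dvd gprim); apply/negP => /(dvdn_leq _).
  rewrite divn_gt0 ?(dvdn_leq n0) // => /(_ isT).
  by rewrite leqNgt ltn_Pdiv.
have cpow e : (d %| e)%N -> c ^+ e = 1.
  move=> de; apply/eqP; rewrite /c -exprM -(prim_order_dvd gprim).
  by rewrite divn_mulAC // -muln_divA // dvdn_mulr.
have cq : c ^+ q = c.
  have -> : q = (q - 1).+1 by lia.
  by rewrite exprS cpow // mulr1.
have cQ : c ^+ (Q + 1) = 1 by apply: cpow.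
pose x0 := g ^+ q - g.
have x00 : x0 != 0.
  rewrite /x0 subr_eq0; apply/negP => /eqP E.
  have : g ^+ (q - 1) = 1.
    apply: (mulfI g0); rewrite mulr1 -exprS.
    by have -> : (q - 1).+1 = q by lia.
  move/eqP; rewrite -(prim_order_dvd gprim) => /(dvdn_leq _).
  have : (q - 1 < n)%N.
    rewrite nE; have : (q ^ 1 < q ^ 3)%N by rewrite ltn_exp2l.
    rewrite expn1; lia.
  by move=> lt /(_ ltac:(lia)); rewrite leqNgt lt.
have T0 : Tr q x0 = 0 by exact: (Tr_sub g pq cF).
have Tc : Tr q (c * x0) = c * Tr q x0.
  have cq2 : c ^+ (q ^ 2) = c by rewrite -mulnn exprM cq cq.
  rewrite /Tr !exprMn cq2 cq; ring.
have E : (f5 F q Q R).[c * x0] = (f5 F q Q R).[x0].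
  rewrite !ev_f5 // -/q -/Q -/R -!/(Tr q _) Tc T0 mulr0.
  rewrite exprMn cq -mulrBr exprMn cQ mul1r //.
have := bij_inj hperm E => /eqP; rewrite -subr_eq0 -{2}[x0]mul1r -mulrBl.
by rewrite mulf_eq0 subr_eq0 (negPf c1) (negPf x00).
Qed.

Local Close Scope ring_scope.
Unset Implicit Arguments.

Theorem corollary1p5 (p k l m : nat) (F : finFieldType) :
  prime p -> (0 < k)%N -> #|F| = (p ^ k) ^ 3 ->
  (permutes (f5 F (p ^ k) (p ^ l) (p ^ m)) <-> gcdn (p ^ k - 1) (p ^ l + 1) = 1%N)
  /\ (gcdn (p ^ k - 1) (p ^ l + 1) = 1%N <-> p = 2%N /\ ole (ord2 k) (ord2 l)).
Proof.
move=> pp k0 cF; split; last exact: part2.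
split; first exact: perm_only pp k0 cF.
move=> H; have [p2 _] := (part2 l pp k0).1 H.
subst p; exact: perm_if.
Qed.
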